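(* Suppose $\rho^w$ and $\rho^b$ are convex risk measures. Then an equal risk price with commitment exists if and only if the fair price interval \[[-\varrho^b(0,\tau_0),\ \varrho^w(0,\tau_0)],\] where $\tau_0\in\arg\min_\tau\varrho^b(0,\tau)$, is bounded. Moreover, when it exists, the equal risk price with commitment equals the center of this interval, $p_0^*=(\varrho^w(0,\tau_0)-\varrho^b(0,\tau_0))/2$.
   Context: Discrete-time setting: filtered probability space $(\Omega,\mathcal{F},(\mathcal{F}_t),\mathbb{P})$, zero interest rate, risky asset with $S_k:=S_{t_k}$ at trading dates $t_0<\dots<t_{K-1}<t_K=T$, $\Delta S_{k+1}=S_{k+1}-S_k$, adapted auxiliary process $Y_k$. Exercise times are stopping times $\tau:\Omega\to\{0,\dots,K\}$ ($\{\tau=k\}\in\mathcal{F}_{t_k}$), payoff $F(S_\tau,Y_\tau)=\sum_k\mathbf{1}\{\tau=k\}F_k(S_k,Y_k)$. $\bar{\mathcal{X}}_\tau(p_0)$: wealth processes with $X^\tau_0=p_0$, $X^\tau_{k+1}(\tau)=X^\tau_k(\tau)+(\xi_k\mathbf{1}\{\tau>k\}+\sum_{i=0}^k\hat\xi^i_k\mathbf{1}\{\tau=i\})\Delta S_{k+1}$ for every $\tau$, with $\xi_k,\hat\xi^i_k$ $\mathcal{F}_{t_k}$-measurable. A convex risk measure is monotone, translation invariant ($\rho(X+m)=\rho(X)+m$), normalized and convex. Define $\varrho^w(p_0,\tau)=\inf_{X^\tau\in\bar{\mathcal{X}}_\tau(p_0)}\rho^w(F(S_\tau,Y_\tau)-X^\tau_K(\tau))$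 and $\varrho^b(p_0,\tau)=\inf_{X^\tau\in\bar{\mathcal{X}}_\tau(-p_0)}\rho^b(-F(S_\tau,Y_\tau)-X^\tau_K(\tau))$. The equal risk price with commitment is the unique $p_0^*$ for which there exists $\tau^*$ with $\varrho^w(p_0^*,\tau^* )=\varrho^b(p_0^*,\tau^* )\in\mathbb{R}$ and $\tau^*\in\arg\min_\tau\varrho^b(p_0^*,\tau)$. *)

(* Defs.v *)
From HB Require Import structures.
From mathcomp Require Import all_boot all_order all_algebra.
From mathcomp Require Import all_classical all_reals all_analysis.
Set Implicit Arguments. Unset Strict Implicit. Unset Printing Implicit Defensive.
Import Order.TTheory GRing.Theory Num.Theory.
Local Open Scope classical_set_scope.
Local Open Scope ring_scope.

Section Defs.
Context {d : measure_display} {Omega : measurableType d} {R : realType}.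

Definition Gmeasurable {dT} {T : measurableType dT}
  (G : set (set Omega)) (f : Omega -> T) : Prop :=
  forall B : set T, measurable B -> G (f @^-1` B).

(* (G k)_{k} is the filtration (F_{t_k})_k, k = 0..K *)
Definition is_filtration (K : nat) (G : nat -> set (set Omega)) : Prop :=
  [/\ forall k, sigma_algebra setT (G k),
      forall k, G k `<=` measurable &
      forall k l, (k <= l)%N -> G k `<=` G l].

Definition adapted {dT} {T : measurableType dT} (K : nat)
  (G : nat -> set (set Omega)) (X : nat -> Omega -> T) : Prop :=
  forall k, (k <= K)%N -> Gmeasurable (G k) (X k).

Definition stopping_time (K : nat) (G : nat -> set (set Omega))
  (tau : Omega -> nat) : Prop :=
  (forall w, (tau w <= K)%N) /\
  (forall k, (k <= K)%N -> G k [set w | tau w = k]).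

Definition convex_risk_measure (rho : (Omega -> R) -> \bar R) : Prop :=
  [/\ (forall X Y : Omega -> R, (forall w, X w <= Y w) -> (rho X <= rho Y)%E),
      (forall (X : Omega -> R) (m : R),
          rho (fun w => (X w + m)%R) = (rho X + m%:E)%E),
      rho (fun _ => 0) = 0%E &
      (forall (X Y : Omega -> R) (l : R), 0 <= l <= 1 ->
         (rho (fun w => (l * X w + (1 - l) * Y w)%R)
          <= l%:E * rho X + (1 - l)%:E * rho Y)%E)].

(* payoff F(S_tau, Y_tau) = sum_k 1{tau = k} F_k(S_k, Y_k) *)
Definition payoff {dY} {TY : measurableType dY}
  (F : nat -> R -> TY -> R) (S : nat -> Omega -> R) (Y : nat -> Omega -> TY)
  (tau : Omega -> nat) : Omega -> R :=
  fun w => F (tau w) (S (tau w) w) (Y (tau w) w).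

(* wealth process X^tau_k(tau) generated by strategies xi_k and
   xih i k (= \hat xi^i_k), started at p0 *)
Fixpoint wealth (S : nat -> Omega -> R) (xi : nat -> Omega -> R)
  (xih : nat -> nat -> Omega -> R) (p0 : R) (tau : Omega -> nat) (k : nat)
  : Omega -> R :=
  match k with
  | 0 => fun _ => p0
  | k'.+1 => fun w =>
      wealth S xi xih p0 tau k' w +
      (xi k' w * (k' < tau w)%N%:R +
       \sum_(i < k'.+1) xih i k' w * (tau w == i)%:R) * (S k'.+1 w - S k' w)
  end.

Definition admissible (G : nat -> set (set Omega)) (xi : nat -> Omega -> R)
  (xih : nat -> nat -> Omega -> R) : Prop :=
  (forall k, Gmeasurable (G k) (xi k)) /\
  (forall i k, (i <= k)%N -> Gmeasurable (G k) (xih i k)).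

Definition rho_writer {dY} {TY : measurableType dY} (K : nat)
  (G : nat -> set (set Omega)) (S : nat -> Omega -> R) (Y : nat -> Omega -> TY)
  (F : nat -> R -> TY -> R) (rhow : (Omega -> R) -> \bar R)
  (p0 : R) (tau : Omega -> nat) : \bar R :=
  ereal_inf [set r | exists xi xih, admissible G xi xih /\
    r = rhow (fun w => payoff F S Y tau w - wealth S xi xih p0 tau K w)].

Definition rho_buyer {dY} {TY : measurableType dY} (K : nat)
  (G : nat -> set (set Omega)) (S : nat -> Omega -> R) (Y : nat -> Omega -> TY)
  (F : nat -> R -> TY -> R) (rhob : (Omega -> R) -> \bar R)
  (p0 : R) (tau : Omega -> nat) : \bar R :=
  ereal_inf [set r | exists xi xih, admissible G xi xih /\
    r = rhob (fun w => - payoff F S Y tau w - wealth S xi xih (- p0) tau K w)].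

Definition ERP_commitment_with {dY} {TY : measurableType dY} (K : nat)
  (G : nat -> set (set Omega)) (S : nat -> Omega -> R) (Y : nat -> Omega -> TY)
  (F : nat -> R -> TY -> R) (rhow rhob : (Omega -> R) -> \bar R)
  (p0 : R) (tau : Omega -> nat) : Prop :=
  [/\ stopping_time K G tau,
      rho_writer K G S Y F rhow p0 tau = rho_buyer K G S Y F rhob p0 tau,
      rho_writer K G S Y F rhow p0 tau \is a fin_num &
      forall tau', stopping_time K G tau' ->
        (rho_buyer K G S Y F rhob p0 tau <= rho_buyer K G S Y F rhob p0 tau')%E].

End Defs.

(* Main.v *)
Require Import Defs.
From HB Require Import structures.
From mathcomp Require Import all_boot all_order all_algebra.
From mathcomp Require Import all_classical all_reals all_analysis.
From mathcomp Require Import ring lra.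
Import Order.TTheory GRing.Theory Num.Theory.
Local Open Scope classical_set_scope.
Local Open Scope ring_scope.

Lemma inf_shift (R : realType) (A : set (\bar R)) (c : R) :
  ereal_inf [set (x + c%:E)%E | x in A] = (ereal_inf A + c%:E)%E.
Proof.
apply/eqP; rewrite eq_le; apply/andP; split.
- rewrite -(leeD2rE (x := (- c)%:E)) // EFinN addeK //.
  apply: le_ereal_inf_tmp => x Ax.
  have h : (ereal_inf [set (x + c%:E)%E | x in A] <= x + c%:E)%E.
    by apply: ereal_inf_lbound; exists x.
  have := leeD2r (- c)%:E h; by rewrite EFinN addeK.
- apply: le_ereal_inf_tmp => _ [x Ax <-].
  apply: leeD2r; exact: ereal_inf_lbound.
Qed.

Lemma wealth_shift {d : measure_display} {Omega : measurableType d} {R : realType}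
  {S : nat -> Omega -> R} {xi xih} (p0 : R) {tau k w} :
  wealth S xi xih p0 tau k w = p0 + wealth S xi xih 0 tau k w.
Proof.
elim: k => [|k IH] /=; first by rewrite addr0.
by rewrite IH addrA.
Qed.

Lemma writer_shift {d : measure_display} {Omega : measurableType d} {R : realType}
  {dY : measure_display} {TY : measurableType dY}
  {K : nat} {G : nat -> set (set Omega)}
  {S : nat -> Omega -> R} {Y : nat -> Omega -> TY} {F : nat -> R -> TY -> R}
  {rhow : (Omega -> R) -> \bar R} p0 tau :
  convex_risk_measure rhow ->
  rho_writer K G S Y F rhow p0 tau = (rho_writer K G S Y F rhow 0 tau + (- p0)%:E)%E.
Proof.
case=> _ tr _ _.
have E : forall xi xih, rhow (fun w => payoff F S Y tau w - wealth S xi xih p0 tau K w)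
   = (rhow (fun w => (payoff F S Y tau w - wealth S xi xih 0 tau K w)%R) + (- p0)%:E)%E.
  move=> xi xih; rewrite -tr; congr rhow; apply: funext => w.
  by rewrite (wealth_shift (p0)) opprD addrA addrAC.
rewrite /rho_writer -inf_shift; congr ereal_inf.
apply/seteqP; split => r /=.
- move=> [xi [xih [adm ->]]]; rewrite E.
  by exists (rhow (fun w => (payoff F S Y tau w - wealth S xi xih 0 tau K w)%R)) => //;
    exists xi, xih.
- move=> [_ [xi [xih [adm ->]]] <-].
  by exists xi, xih; rewrite E.
Qed.

Lemma buyer_shift {d : measure_display} {Omega : measurableType d} {R : realType}
  {dY : measure_display} {TY : measurableType dY}
  {K : nat} {G : nat -> set (set Omega)}
  {S : nat -> Omega -> R} {Y : nat -> Omega -> TY} {F : nat -> R -> TY -> R}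
  {rhob : (Omega -> R) -> \bar R} p0 tau :
  convex_risk_measure rhob ->
  rho_buyer K G S Y F rhob p0 tau = (rho_buyer K G S Y F rhob 0 tau + p0%:E)%E.
Proof.
case=> _ tr _ _.
have E : forall xi xih,
   rhob (fun w => - payoff F S Y tau w - wealth S xi xih (- p0) tau K w)
   = (rhob (fun w => (- payoff F S Y tau w - wealth S xi xih (- 0) tau K w)%R) + p0%:E)%E.
  move=> xi xih; rewrite -tr; congr rhob; apply: funext => w.
  rewrite (wealth_shift (- p0)) (wealth_shift (- 0)) oppr0 add0r.
  by rewrite opprD opprK addrA addrAC.
rewrite /rho_buyer -inf_shift; congr ereal_inf.
apply/seteqP; split => r /=.
- move=> [xi [xih [adm ->]]]; rewrite E.
  by exists (rhob (fun w => (- payoff F S Y tau w - wealth S xi xih (- 0) tau K w)%R)) => //;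
    exists xi, xih.
- move=> [_ [xi [xih [adm ->]]] <-].
  by exists xi, xih; rewrite E.
Qed.

Theorem lemma3 (d : measure_display) (Omega : measurableType d) (R : realType)
  (dY : measure_display) (TY : measurableType dY)
  (K : nat) (G : nat -> set (set Omega))
  (S : nat -> Omega -> R) (Y : nat -> Omega -> TY) (F : nat -> R -> TY -> R)
  (rhow rhob : (Omega -> R) -> \bar R) :
  is_filtration K G -> adapted K G S -> adapted K G Y ->
  convex_risk_measure rhow -> convex_risk_measure rhob ->
  ((exists p0 : R, exists tau, ERP_commitment_with K G S Y F rhow rhob p0 tau)
   <->
   (exists tau0, [/\ stopping_time K G tau0,
      (forall tau, stopping_time K G tau ->
         (rho_buyer K G S Y F rhob 0 tau0 <= rho_buyer K G S Y F rhob 0 tau)%E),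
      (- rho_buyer K G S Y F rhob 0 tau0)%E \is a fin_num &
      rho_writer K G S Y F rhow 0 tau0 \is a fin_num]))
  /\
  (forall (p0 : R) tau, ERP_commitment_with K G S Y F rhow rhob p0 tau ->
     (forall tau', stopping_time K G tau' ->
        (rho_buyer K G S Y F rhob 0 tau <= rho_buyer K G S Y F rhob 0 tau')%E) /\
     p0 = (fine (rho_writer K G S Y F rhow 0 tau)
           - fine (rho_buyer K G S Y F rhob 0 tau)) / 2).
Proof.
move=> _ _ _ cw cb.
have key : forall p0 tau, ERP_commitment_with K G S Y F rhow rhob p0 tau ->
  [/\ stopping_time K G tau,
      (forall tau', stopping_time K G tau' ->
        (rho_buyer K G S Y F rhob 0 tau <= rho_buyer K G S Y F rhob 0 tau')%E),
      rho_buyer K G S Y F rhob 0 tau \is a fin_num,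
      rho_writer K G S Y F rhow 0 tau \is a fin_num &
      p0 = (fine (rho_writer K G S Y F rhow 0 tau)
           - fine (rho_buyer K G S Y F rhob 0 tau)) / 2].
  move=> p0 tau [st eq fin mn].
  rewrite !(writer_shift (p0) tau cw) !(buyer_shift (p0) tau cb) in eq fin mn.
  have finW : rho_writer K G S Y F rhow 0 tau \is a fin_num.
    by move: fin; rewrite fin_numD => /andP[].
  have finB : rho_buyer K G S Y F rhob 0 tau \is a fin_num.
    by move: fin; rewrite eq fin_numD => /andP[].
  split => //.
  - move=> tau' st'; have := mn tau' st'.
    by rewrite (buyer_shift (p0) tau' cb) leeD2rE.
  - move: eq; rewrite -(fineK finW) -(fineK finB) /= -!EFinD => -[eq].
    lra.
split.
- split.
  + move=> [p0 [tau /key [st mn fB fW _]]].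
    by exists tau; split => //; rewrite fin_numN.
  + move=> [tau [st mn fB fW]].
    rewrite fin_numN in fB.
    have hW := fun p => @writer_shift _ _ _ _ _ K G S Y F rhow p tau cw.
    have hB := fun p t => @buyer_shift _ _ _ _ _ K G S Y F rhob p t cb.
    pose q := (fine (rho_writer K G S Y F rhow 0 tau) - fine (rho_buyer K G S Y F rhob 0 tau)) / 2.
    have qE : q = (fine (rho_writer K G S Y F rhow 0 tau) - fine (rho_buyer K G S Y F rhob 0 tau)) / 2 by [].
    clearbody q.
    exists q, tau.
    split; [exact: st | | |].
    * rewrite hW hB; move: qE fW fB.
      case: (rho_writer K G S Y F rhow 0 tau) => // w.
      case: (rho_buyer K G S Y F rhob 0 tau) => // b /= -> _ _.
      by rewrite -!EFinD; congr EFin; field.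
    * apply: (eq_ind_r (fun x => x \is a fin_num) _ (hW q)); by rewrite fin_numD fW.
    * move=> tau' st'.
      rewrite hB (hB _ tau').
      by apply: leeD2r; apply: mn.
- by move=> p0 tau /key [].
Qed.
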